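(* Let $\langle\,,\rangle$ be the bilinear form on $K\{X\}_\infty$ for which the monomials are orthonormal (extended to tensor products by $\langle f_1\otimes f_2,g_1\otimes g_2\rangle=\langle f_1,g_1\rangle\langle f_2,g_2\rangle$), and define $\sqcup\!\sqcup:K\{X\}_\infty\otimes K\{X\}_\infty\to K\{X\}_\infty$ by $\langle g_1\sqcup\!\sqcup g_2,h\rangle=\langle g_1\otimes g_2,\Delta_a(h)\rangle$ for all $h$ (i.e. the graded dual of $\Delta_a$, with $K\{X\}_\infty$ identified with its graded dual via the dual basis of monomials). Then $\sqcup\!\sqcup$ is a commutative associative multiplication with $1\sqcup\!\sqcup1=1$, and for monomials $T^1,T^2$, $$T^1\sqcup\!\sqcup T^2=\sum_{T\text{ a shuffle of }T^1\text{ and }T^2}c_T\,T,$$ where $c_T\ge1$ is the number of subsets $I\subseteq\mathrm{Le}(T)$ with $\mathrm{red}(T|I)=T^1$ and $\mathrm{red}(T|I^c)=T^2$.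
   Context: $K$ is a field of characteristic $0$ and $X=\{x_1,x_2,\dots\}$ a finite or countable set of variables. A planar rooted tree is reduced if no vertex has exactly one incoming edge. $K\{X\}_\infty$ has basis the monomials: the empty tree $1$ and all planar reduced rooted trees with leaves labelled by elements of $X$, graded by number of leaves; for $k\ge2$, $\vee^k$ grafts $k$ nonempty trees (in order) onto a new root, extended multilinearly, with unit conventions (arguments $1$ omitted, $\vee^1=\mathrm{id}$, $\vee^k(1,\dots,1)=1$). The tensor square carries the operations componentwise, and $\Delta_a$ is the unique unital homomorphism with $\Delta_a(x_i)=x_i\otimes1+1\otimes x_i$. $\mathrm{Le}(T)$ is the set of leaves of $T$, $I^c=\mathrm{Le}(T)\setminus I$. The leaf-restriction $T|I$ is obtained from $T$ by deleting every vertex whose full subtree contains no leaf of $I$ (empty tree $1$ if $I=\emptyset$); $\mathrm{red}(S)$ deletes all vertices with exactly one child, keeping labels, the descendant relation and the planar order. $T$ is a shuffle of $T^1$ and $T^2$ if $\mathrm{red}(T|I)=T^1$ and $\mathrm{red}(T|I^c)=T^2$ for some $I\subseteq\mathrm{Le}(T)$. *)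

(* Defs.v *)
From HB Require Import structures.
From mathcomp Require Import all_boot all_algebra.
Set Implicit Arguments. Unset Strict Implicit. Unset Printing Implicit Defensive.
Import GRing.Theory.
Local Open Scope ring_scope.

Section Trees.
Variable X : countType.

Inductive tree := Leaf of X | Node of seq tree.

Fixpoint tree_enc (t : tree) : GenTree.tree X :=
  match t with
  | Leaf x => GenTree.Leaf x
  | Node ts => GenTree.Node 0 (map tree_enc ts)
  end.

Fixpoint tree_dec (g : GenTree.tree X) : tree :=
  match g with
  | GenTree.Leaf x => Leaf x
  | GenTree.Node _ gs => Node (map tree_dec gs)
  end.

Lemma tree_encK : cancel tree_enc tree_dec.
Proof.
rewrite /cancel; fix IH 1; case=> [x|ts] //=; congr Node.
elim: ts => //= t ts IHts; by rewrite IH IHts.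
Qed.

HB.instance Definition _ := Countable.copy tree (can_type tree_encK).

Fixpoint reduced (t : tree) : bool :=
  match t with
  | Leaf _ => true
  | Node ts => (1 < size ts)%N && all reduced ts
  end.

(* None is the empty tree 1 *)
Definition reducedo (t : option tree) : bool :=
  if t is Some u then reduced u else true.

(* monomials of K{X}_infty *)
Definition mono := {t : option tree | reducedo t}.

Definition mono1 : mono := exist _ None isT.
Definition monoX (x : X) : mono := exist _ (Some (Leaf x)) isT.

(* grafting with the unit conventions: arguments 1 omitted,
   vee^1 = id, vee^k(1,...,1) = 1 *)
Definition vee_raw (ts : seq (option tree)) : option tree :=
  match pmap id ts with
  | [::] => None
  | [:: t] => Some t
  | l => Some (Node l)
  end.

Lemma vee_raw_reduced (ms : seq mono) : reducedo (vee_raw (map val ms)).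
Proof.
rewrite /vee_raw.
have H : all reduced (pmap id (map val ms)).
  elim: ms => //= -[[t|] Ht] ms IH //=; rewrite IH andbT; exact: Ht.
move: H; case: (pmap id _) => [|t [|u l]] //=; first by rewrite andbT.
Qed.

Definition veem (ms : seq mono) : mono := exist (fun t => reducedo t) _ (vee_raw_reduced ms).

(* Leaves, as positions (paths of child indices from the root), in planar
   (left-to-right) order. *)
Fixpoint leaves (t : tree) : seq (seq nat) :=
  match t with
  | Leaf _ => [:: [::]]
  | Node ts =>
    let fix go (i : nat) (us : seq tree) :=
      match us with
      | [::] => [::]
      | u :: us' => [seq i :: p | p <- leaves u] ++ go i.+1 us'
      end in go 0%N ts
  end.

Definition leaveso (t : option tree) : seq (seq nat) :=
  if t is Some u then leaves u else [::].

(* T|I : delete every vertex whose subtree contains no leaf of I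
   (I given as a predicate on leaf positions); None = empty tree *)
Fixpoint restr (I : seq nat -> bool) (t : tree) : option tree :=
  match t with
  | Leaf x => if I [::] then Some (Leaf x) else None
  | Node ts =>
    let fix go (i : nat) (us : seq tree) :=
      match us with
      | [::] => [::]
      | u :: us' =>
        (if restr (fun p => I (i :: p)) u is Some s then [:: s] else [::])
          ++ go i.+1 us'
      end in
    let l := go 0%N ts in
    if l is [::] then None else Some (Node l)
  end.

Definition restro (I : seq nat -> bool) (t : option tree) : option tree :=
  if t is Some u then restr I u else None.

Fixpoint red (t : tree) : tree :=
  match t with
  | Leaf x => Leaf x
  | Node [:: u] => red u
  | Node ts => Node (map red ts)
  end.

Definition redo (t : option tree) : option tree := omap red t.

(* subsets I of Le(T), encoded as sets of indices into the (duplicate-free)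
   list of leaf positions *)
Definition leafpred (t : option tree)
  (I : {set 'I_(size (leaveso t))}) : seq nat -> bool :=
  fun p => [exists i in I, nth [::] (leaveso t) i == p].

Definition shuffle_by (T1 T2 T : mono)
  (I : {set 'I_(size (leaveso (val T)))}) : bool :=
  (redo (restro (leafpred I) (val T)) == val T1) &&
  (redo (restro (leafpred (~: I)) (val T)) == val T2).

Definition is_shuffle (T1 T2 T : mono) : bool :=
  [exists I : {set 'I_(size (leaveso (val T)))}, @shuffle_by T1 T2 T I].

Definition cT (T1 T2 T : mono) : nat :=
  #|[set I : {set 'I_(size (leaveso (val T)))} | @shuffle_by T1 T2 T I]|.

End Trees.

(* The vector space K{X}_infty and its tensor square, as finite formal *)
(* linear combinations of monomials (resp. pairs of monomials).        *)
Section Vect.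
Variables (X : countType) (K : fieldType).

Definition vec := seq (K * mono X).
Definition vec2 := seq (K * (mono X * mono X)).

Definition coef (v : vec) (m : mono X) : K := \sum_(p <- v | p.2 == m) p.1.
Definition coef2 (v : vec2) (m : mono X * mono X) : K :=
  \sum_(p <- v | p.2 == m) p.1.

Definition vadd (v w : vec) : vec := v ++ w.
Definition vscale (k : K) (v : vec) : vec := [seq (k * p.1, p.2) | p <- v].
Definition vmono (m : mono X) : vec := [:: (1, m)].
Definition vone : vec := vmono (mono1 X).

Definition form (f g : vec) : K :=
  \sum_(p <- f) \sum_(q <- g | p.2 == q.2) p.1 * q.1.
Definition form2 (f g : vec2) : K :=
  \sum_(p <- f) \sum_(q <- g | p.2 == q.2) p.1 * q.1.

Definition tens (f g : vec) : vec2 :=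
  [seq (p.1 * q.1, (p.2, q.2)) | p <- f, q <- g].

Fixpoint cprod (A : Type) (vs : seq (seq A)) : seq (seq A) :=
  match vs with
  | [::] => [:: [::]]
  | v :: vs' => [seq p :: c | p <- v, c <- cprod vs']
  end.

Definition vee (vs : seq vec) : vec :=
  [seq (\prod_(p <- c) p.1, veem (map snd c)) | c <- cprod vs].

Definition vee2 (ws : seq vec2) : vec2 :=
  [seq (\prod_(p <- c) p.1,
        (veem (map (fun p => p.2.1) c), veem (map (fun p => p.2.2) c)))
  | c <- cprod ws].

(* Delta_a on trees: the unique unital homomorphism with
   Delta_a(x) = x (x) 1 + 1 (x) x, computed recursively using
   T = vee^k(T_1, ..., T_k) for a tree with root children T_1..T_k. *)
Fixpoint delta_tree (t : tree X) : vec2 :=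
  match t with
  | Leaf x => [:: (1, (monoX x, mono1 X)); (1, (mono1 X, monoX x))]
  | Node ts => vee2 (map delta_tree ts)
  end.

Definition delta_mono (m : mono X) : vec2 :=
  if val m is Some t then delta_tree t else [:: (1, (mono1 X, mono1 X))].

Definition delta_a (v : vec) : vec2 :=
  flatten [seq [seq (p.1 * q.1, q.2) | q <- delta_mono p.2] | p <- v].

Definition is_dual_of_delta (sh : vec -> vec -> vec) : Prop :=
  forall g1 g2 h : vec, form (sh g1 g2) h = form2 (tens g1 g2) (delta_a h).

End Vect.

(* Main.v *)
Require Import Defs.
From HB Require Import structures.
From mathcomp Require Import all_boot all_algebra.
From mathcomp Require Import ring.
Set Implicit Arguments. Unset Strict Implicit. Unset Printing Implicit Defensive.
Import GRing.Theory.

Section T.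
Variable X : countType.
Notation tree := (tree X).

Lemma tree_ind' (P : tree -> Prop) :
  (forall x, P (Leaf x)) ->
  (forall ts, (forall t, t \in ts -> P t) -> P (Node ts)) ->
  forall t, P t.
Proof.
move=> HL HN; fix IH 1; case=> [x|ts]; first exact: HL.
apply: HN. elim: ts => [|u us IHus] t. rewrite in_nil => H; clear IH; discriminate H. rewrite inE => /orP [/eqP ->|]. exact: IH. exact: IHus.
Qed.

Fixpoint labels (t : tree) : seq X :=
  match t with Leaf x => [:: x] | Node ts => flatten (map labels ts) end.
Definition nl t := size (labels t).
Definition labelso (t : option tree) := if t is Some u then labels u else [::].
Definition nlo t := size (labelso t).

Fixpoint rml (f : seq bool -> tree -> option tree) (b : seq bool) (ts : seq tree)
  : seq (option tree) :=
  match ts with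
  | [::] => [::]
  | u :: us => f (take (nl u) b) u :: rml f (drop (nl u) b) us
  end.

Definition nodeo (l : seq tree) : option tree := if l is [::] then None else Some (Node l).

Fixpoint rm (b : seq bool) (t : tree) {struct t} : option tree :=
  match t with
  | Leaf x => if head false b then Some (Leaf x) else None
  | Node ts => nodeo (pmap id (rml rm b ts))
  end.
Definition rmo b (t : option tree) := if t is Some u then rm b u else None.




Lemma rm_node b ts : rm b (Node ts) = nodeo (pmap id (rml rm b ts)).
Proof. by []. Qed.

Lemma nl_node ts : nl (Node ts) = sumn (map nl ts).
Proof. by rewrite /nl /= size_flatten /shape -map_comp. Qed.

Lemma labelso_nodeo l : labelso (nodeo l) = flatten (map labels l).
Proof. by case: l. Qed.

Lemma flatten_labelso L : flatten (map labels (pmap id L)) = flatten (map labelso L).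
Proof. by elim: L => [|[u|] L IH] //=; rewrite IH. Qed.

Lemma labels_rm t b : size b = nl t -> labelso (rm b t) = mask b (labels t).
Proof.
elim/tree_ind': t b => [x|ts IH] b.
  by case: b => [|c [|]] //= _; case: c.
rewrite nl_node rm_node labelso_nodeo flatten_labelso /=.
elim: ts IH b => [|u us IHus] IH b /=; first by case: b.
move=> Hb; rewrite -[in mask b _](cat_take_drop (nl u) b) mask_cat; last first.
  by rewrite size_takel // Hb leq_addr.
rewrite IH ?mem_head // ?size_takel // ?Hb ?leq_addr //; congr cat.
apply: IHus; first by move=> t Ht; apply: IH; rewrite inE Ht orbT.
by rewrite size_drop Hb addKn.
Qed.

Lemma red_node ts : red (Node ts) = if ts is [:: u] then red u else Node (map (@red X) ts).
Proof. by case: ts => [|u [|v w]]. Qed.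

Lemma labels_red t : labels (red t) = labels t.
Proof.
elim/tree_ind': t => [x|ts IH] //; rewrite red_node.
case: ts IH => [|u [|v w]] IH //=; first by rewrite cats0 IH ?mem_head.
congr (_ ++ _); first by rewrite IH ?mem_head.
congr (_ ++ _); first by rewrite IH // !inE eqxx orbT.
congr flatten; rewrite -map_comp; apply/eq_in_map => t Ht /=; apply: IH.
by rewrite !inE Ht !orbT.
Qed.

Lemma nl_red t : nl (red t) = nl t.
Proof. by rewrite /nl labels_red. Qed.

Lemma pmap_redo L : pmap id (map (redo (X:=X)) L) = map (@red X) (pmap id L).
Proof. by elim: L => [|[u|] L IH] //=; rewrite IH. Qed.

Lemma redo_nodeo L : redo (nodeo (pmap id L)) = vee_raw (map (redo (X:=X)) L).
Proof.
rewrite /vee_raw pmap_redo; case: (pmap id L) => [|u [|v w]] //.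
Qed.

Lemma vee_raw_red (l : seq (option tree)) : all (reducedo (X:=X)) l -> reducedo (vee_raw l).
Proof.
rewrite /vee_raw => H.
have : all (reduced (X:=X)) (pmap id l).
  by elim: l H => [|[u|] l IH] //= /andP [-> /IH].
by case: (pmap id l) => [|u [|v w]] //= /andP [] // .
Qed.

Lemma redrm_reduced b t : reducedo (redo (rm b t)).
Proof.
elim/tree_ind': t b => [x|ts IH] b; first by rewrite /=; case: ifP.
rewrite rm_node redo_nodeo; apply: vee_raw_red.
elim: ts IH b => [|u us IHus] IH b //=.
rewrite IH ?mem_head //=; apply: IHus => t Ht; apply: IH; by rewrite inE Ht orbT.
Qed.

Lemma redrmo_reduced b t : reducedo (redo (rmo b t)).
Proof. by case: t => [t|] //=; apply: redrm_reduced. Qed.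

Definition Mred (b : seq bool) (t : option tree) : mono X :=
  exist (fun t => reducedo t) _ (redrmo_reduced b t).

End T.

Fixpoint masks n : seq (seq bool) :=
  if n is n'.+1 then [seq c :: x | c <- [:: true; false], x <- masks n'] else [:: [::]].

Lemma masksS n : masks n.+1 = map (cons true) (masks n) ++ map (cons false) (masks n).
Proof. by rewrite /= cats0. Qed.

Lemma mem_masks n b : (b \in masks n) = (size b == n).
Proof.
elim: n b => [|n IH] b; first by case: b.
rewrite masksS mem_cat; case: b => [|c b] /=.
  by apply/negP => /orP [] /mapP [].
have inj (c1 : bool) : injective (cons c1) by move=> x y [] .
case: c; rewrite (mem_map (inj _)) IH.
  by rewrite orbC; case: (mapP) => // -[x].
by case: (mapP) => // -[x].
Qed.

Lemma uniq_masks n : uniq (masks n).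
Proof.
elim: n => [|n IH] //; rewrite masksS cat_uniq !map_inj_uniq ?IH //=; try by move=> x y [].
rewrite andbT; apply/hasPn => x /mapP [y _ ->]; apply/negP => /mapP [z _] //.
Qed.

Lemma masks_add a c : masks (a + c) = [seq x ++ y | x <- masks a, y <- masks c].
Proof.
elim: a => [|a IH]; first by rewrite add0n /= cats0 map_id.
rewrite addSn !masksS allpairs_cat !allpairs_mapl IH !map_allpairs //.
Qed.

Lemma cprod_map (A B C : Type) (g : A -> B -> C) (h : A -> seq B) ts :
  cprod [seq map (g t) (h t) | t <- ts] =
  [seq [seq g p.1 p.2 | p <- zip ts bs] | bs <- cprod (map h ts)].
Proof.
elim: ts => [|t ts IH] //=.
by rewrite IH allpairs_mapl allpairs_mapr map_allpairs.
Qed.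

Lemma masks_sum ns : masks (sumn ns) = map flatten (cprod (map masks ns)).
Proof.
elim: ns => [|n ns IH] //=; rewrite masks_add IH allpairs_mapr map_allpairs //.
Qed.

Lemma mem_cprod (A : eqType) (vs : seq (seq A)) bs :
  bs \in cprod vs -> all2 (fun x v => x \in v) bs vs.
Proof.
elim: vs bs => [|v vs IH] bs /=; first by rewrite inE => /eqP ->.
by case/allpairsP => -[x c] /= [Hx Hc ->] /=; rewrite Hx IH.
Qed.

Lemma rml_flatten (X : countType) f bs (ts : seq (tree X)) :
  all2 (fun b t => size b == nl t) bs ts ->
  rml f (flatten bs) ts = [seq f p.2 p.1 | p <- zip ts bs].
Proof.
elim: ts bs => [|t ts IH] [|b bs] //= /andP [/eqP Hb Hbs].
by rewrite -Hb take_size_cat // drop_size_cat // IH.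
Qed.

Lemma all2_masks (X : countType) bs (ts : seq (tree X)) :
  all2 (fun x v => x \in v) bs [seq masks (nl t) | t <- ts] ->
  all2 (fun b t => size b == nl t) bs ts.
Proof.
by elim: ts bs => [|t ts IH] [|b bs] //= /andP [H1 H2]; rewrite -mem_masks H1 IH.
Qed.

Lemma zip_mapr (A B C : Type) (f : B -> C) (s : seq A) (t : seq B) :
  zip s (map f t) = map (fun p => (p.1, f p.2)) (zip s t).
Proof. by elim: s t => [|x s IH] [|y t] //=; rewrite IH. Qed.

Section Delta.
Variables (X : countType) (K : fieldType).
Local Open Scope ring_scope.

Definition dterm (b : seq bool) (t : option (tree X)) : K * (mono X * mono X) :=
  (1, (Mred b t, Mred (map negb b) t)).

Lemma delta_node ts : delta_tree K (Node ts) = vee2 (map (@delta_tree X K) ts).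
Proof. reflexivity. Qed.

Lemma delta_list t : delta_tree K t = [seq dterm b (Some t) | b <- masks (nl t)].
Proof.
elim/tree_ind': t => [x|ts IH].
  by rewrite /= /dterm; congr [:: (_, (_,_)); (_, (_,_))]; apply: val_inj.
rewrite delta_node.
have -> : [seq delta_tree K t | t <- ts] = [seq [seq dterm b (Some t) | b <- masks (nl t)] | t <- ts].
  by apply/eq_in_map => t Ht; rewrite IH.
rewrite /vee2 (cprod_map (fun t b => dterm b (Some t)) (fun t => masks (nl t))) -map_comp nl_node masks_sum -map_comp -map_comp.
apply/eq_in_map => bs /mem_cprod /all2_masks Hbs /=.
rewrite /dterm; congr (_, (_, _)).
- by rewrite big_map big1.
- apply: val_inj => /=. rewrite redo_nodeo rml_flatten // -!map_comp.
  by congr vee_raw; apply: eq_map => p.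
- apply: val_inj => /=; rewrite map_flatten redo_nodeo rml_flatten; last first.
    by clear IH; elim: ts bs Hbs => [|t ts IHt] [|b bs] //= /andP [H1 /IHt H2]; rewrite size_map H1 H2.
  rewrite zip_mapr -!map_comp.
  by congr vee_raw; apply: eq_map => p.
Qed.
End Delta.

Section Coef.
Variables (X : countType) (K : fieldType).
Local Open Scope ring_scope.

Lemma delta_mono_list (m : mono X) :
  delta_mono K m = [seq dterm K b (val m) | b <- masks (nlo (val m))].
Proof.
rewrite /delta_mono; case: m => [[t|] Ht] /=; first exact: delta_list.
by rewrite /dterm; congr [:: (_, (_,_))]; apply: val_inj.
Qed.

Definition D (m u v : mono X) : nat :=
  count (fun b => (Mred b (val m) == u) && (Mred (map negb b) (val m) == v))
    (masks (nlo (val m))).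

Lemma coef2_delta (m : mono X) x : coef2 (delta_mono K m) x = (D m x.1 x.2)%:R.
Proof.
rewrite /coef2 delta_mono_list big_map /D -sum1_count natr_sum.
case: x => u v /=; apply: eq_bigl => b; by rewrite /dterm /= xpair_eqE.
Qed.

Lemma form_vmono (f : vec X K) (m : mono X) : Defs.form f (vmono K m) = coef f m.
Proof.
rewrite /Defs.form /coef [in RHS]big_mkcond; apply: eq_bigr => p _.
by rewrite big_cons big_nil /=; case: ifP; rewrite ?mulr1 ?addr0.
Qed.

Lemma form2_delta (w : vec2 X K) (h : vec X K) :
  form2 w (delta_a h) = \sum_(q <- h) q.1 * \sum_(x <- w) x.1 * (D q.2 x.2.1 x.2.2)%:R.
Proof.
rewrite /form2 /delta_a.
transitivity (\sum_(p <- w) \sum_(q <- h) p.1 * (q.1 * (D q.2 p.2.1 p.2.2)%:R)).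
  apply: eq_bigr => p _; rewrite big_flatten big_map; apply: eq_bigr => q _.
  rewrite big_map -coef2_delta /coef2 mulr_sumr mulr_sumr.
  by apply: eq_big => [d|d _]; rewrite ?mulrA //= eq_sym.
rewrite exchange_big; apply: eq_bigr => q _; rewrite mulr_sumr.
by apply: eq_bigr => x _; rewrite mulrCA.
Qed.

Lemma sum_tens (f g : vec X K) (F : K * (mono X * mono X) -> K) :
  \sum_(x <- tens f g) F x = \sum_(p <- f) \sum_(r <- g) F (p.1 * r.1, (p.2, r.2)).
Proof. by rewrite /tens big_allpairs_dep. Qed.

Definition Bsum (f g : vec X K) (m : mono X) : K :=
  \sum_(p <- f) \sum_(r <- g) p.1 * r.1 * (D m p.2 r.2)%:R.

Lemma form2_tens_delta (f g h : vec X K) :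
  form2 (tens f g) (delta_a h) = \sum_(q <- h) q.1 * Bsum f g q.2.
Proof. by rewrite form2_delta; apply: eq_bigr => q _; rewrite sum_tens. Qed.

Lemma coef_sh sh : is_dual_of_delta sh -> forall f g m, coef (sh f g) m = Bsum f g m.
Proof.
move=> Hd f g m; rewrite -form_vmono Hd form2_tens_delta.
by rewrite big_cons big_nil addr0 mul1r.
Qed.

End Coef.

Lemma count_masks_neg n (P : pred (seq bool)) :
  count P (masks n) = count (fun b => P (map negb b)) (masks n).
Proof.
elim: n P => [|n IH] P //; rewrite masksS !count_cat !count_map addnC.
by congr addn; rewrite IH.
Qed.

Lemma nl_pos (X : countType) (t : tree X) : reduced t -> (0 < nl t)%N.
Proof.
elim/tree_ind': t => [x|ts IH] //=; rewrite nl_node.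
case: ts IH => [|u us] IH //= /andP [_ /andP [Hu _]].
by rewrite (leq_trans (IH u (mem_head _ _) Hu)) // leq_addr.
Qed.

Section Alg.
Variables (X : countType) (K : fieldType).
Local Open Scope ring_scope.

Lemma D_sym (m u v : mono X) : D m u v = D m v u.
Proof.
rewrite /D count_masks_neg; apply: eq_count => b /=.
by rewrite mapK; [rewrite andbC | exact: negbK].
Qed.

Lemma Bsum_addl k (a b c : vec X K) m :
  Bsum (vadd (vscale k a) b) c m = k * Bsum a c m + Bsum b c m.
Proof.
rewrite /Bsum /vadd /vscale big_cat big_map mulr_sumr; congr (_ + _).
apply: eq_bigr => p _; rewrite mulr_sumr; apply: eq_bigr => r _ /=.
by rewrite !mulrA.
Qed.

Lemma Bsum_addr k (a b c : vec X K) m :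
  Bsum a (vadd (vscale k b) c) m = k * Bsum a b m + Bsum a c m.
Proof.
rewrite /Bsum /vadd /vscale mulr_sumr -big_split; apply: eq_bigr => p _ /=.
rewrite big_cat big_map mulr_sumr; congr (_ + _); apply: eq_bigr => r _ /=.
by rewrite !mulrA [k * p.1]mulrC.
Qed.

Lemma Bsum_comm (a b : vec X K) m : Bsum a b m = Bsum b a m.
Proof.
rewrite /Bsum exchange_big; apply: eq_bigr => r _; apply: eq_bigr => p _.
by rewrite D_sym [r.1 * _]mulrC.
Qed.

Lemma Bsum_mono (T1 T2 T : mono X) :
  Bsum (vmono K T1) (vmono K T2) T = (D T T1 T2)%:R.
Proof. by rewrite /Bsum !big_cons !big_nil !addr0 !mul1r. Qed.

Lemma D_one (m : mono X) : D m (mono1 X) (mono1 X) = (m == mono1 X).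
Proof.
case: m => [[t|] Ht]; last first.
  by rewrite /D.
have -> : (exist (fun t => reducedo t) (Some t) Ht == mono1 X) = false by [].
rewrite /D /=; apply/eqP; rewrite -leqn0 leqNgt -has_count; apply/hasP => -[b].
rewrite mem_masks => /eqP Hb /andP [/eqP H1 /eqP H2]; have {}Hb : size b = nl t := Hb.
have E (c : seq bool) : size c = nl t -> Mred c (Some t) = mono1 X -> count id c = 0%N.
  move=> Hc /(congr1 val) /= H; have := labels_rm Hc.
  by case: (rm c t) H => //= _ /(congr1 size); rewrite size_mask ?Hc.
have := E _ Hb H1; have := E (map negb b); rewrite size_map count_map => /(_ Hb H2).
have := count_predC id b; rewrite Hb => H3 H4 H5.
have : nl t = 0%N by rewrite -H3 H5 add0n; exact: H4.
by move/eqP; rewrite -leqn0 leqNgt nl_pos.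
Qed.

End Alg.

Section Restr.
Variable X : countType.
Notation tree := (tree X).

Fixpoint goL (i : nat) (us : seq tree) : seq (seq nat) :=
  match us with
  | [::] => [::]
  | u :: us' => [seq i :: p | p <- leaves u] ++ goL i.+1 us'
  end.

Lemma leaves_node ts : leaves (Node ts) = goL 0 ts.
Proof. by rewrite /=; elim: ts 0%N => //= u us IH i; rewrite IH. Qed.

Fixpoint goR (I : seq nat -> bool) (i : nat) (us : seq tree) : seq tree :=
  match us with
  | [::] => [::]
  | u :: us' => (if restr (fun p => I (i :: p)) u is Some s then [:: s] else [::])
                 ++ goR I i.+1 us'
  end.

Lemma restr_node I ts : restr I (Node ts) = nodeo (goR I 0 ts).
Proof.
rewrite /=; have -> // : forall i, (fix go (i : nat) (us : seq tree) {struct us} : seq tree :=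
        match us with
        | [::] => [::]
        | u :: us' =>
            match restr (fun p : seq nat => I (i :: p)) u with
            | Some s => [:: s]
            | None => [::]
            end ++ go i.+1 us'
        end) i ts = goR I i ts.
by elim: ts => //= u us IH i; rewrite IH.
Qed.

Lemma size_leaves (t : tree) : size (leaves t) = nl t.
Proof.
elim/tree_ind': t => [x|ts IH] //; rewrite leaves_node nl_node.
elim: ts 0%N IH => [|u us IHus] i IH //=.
rewrite size_cat size_map IH ?mem_head // (IHus i.+1) // => t Ht.
by apply: IH; rewrite inE Ht orbT.
Qed.

Lemma goL_head i (us : seq tree) p : p \in goL i us -> (0 < size p)%N && (i <= head 0 p)%N.
Proof.
elim: us i => [|u us IH] i //=; rewrite mem_cat => /orP [/mapP [q _ ->] //=|].
by move/IH => /andP [-> /ltnW].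
Qed.

Lemma size_leavesO (t : option tree) : size (leaveso t) = nlo t.
Proof. by case: t => [t|] //=; apply: size_leaves. Qed.

Lemma uniq_leaves (t : tree) : uniq (leaves t).
Proof.
elim/tree_ind': t => [x|ts IH] //; rewrite leaves_node.
elim: ts 0%N IH => [|u us IHus] i IH //=.
rewrite cat_uniq map_inj_uniq ?IH ?mem_head //=; last by move=> x y [].
rewrite IHus ?andbT; last by move=> t Ht; apply: IH; rewrite inE Ht orbT.
apply/hasPn => p /goL_head /andP [_ H]; apply/mapP => -[q _ E].
by move: H; rewrite E /= ltnn.
Qed.

Lemma restr_rm (t : tree) I : restr I t = rm (map I (leaves t)) t.
Proof.
elim/tree_ind': t I => [x|ts IH] I //; rewrite restr_node leaves_node rm_node.
congr nodeo.
elim: ts 0%N IH => [|u us IHus] i IH //=.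
rewrite map_cat take_size_cat ?drop_size_cat ?size_map ?size_leaves //.
rewrite IH ?mem_head // -map_comp.
case: (rm _ u) => [s|] /=; rewrite IHus // => t Ht; apply: IH; by rewrite inE Ht orbT.
Qed.


Definition maskof n (I : {set 'I_n}) : seq bool := [seq i \in I | i <- enum 'I_n].

Lemma size_maskof n (I : {set 'I_n}) : size (maskof I) = n.
Proof. by rewrite size_map size_enum_ord. Qed.

Lemma nth_maskof n (I : {set 'I_n}) (i : 'I_n) : nth false (maskof I) i = (i \in I).
Proof. by rewrite (nth_map i) ?size_enum_ord // nth_ord_enum. Qed.

Lemma uniq_leaveso (t : option tree) : uniq (leaveso t).
Proof. by case: t => [t|] //=; apply: uniq_leaves. Qed.

Lemma leafpred_mask (t : option tree) (I : {set 'I_(size (leaveso t))}) :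
  map (leafpred I) (leaveso t) = maskof I.
Proof.
apply: (@eq_from_nth _ false); first by rewrite size_map size_maskof.
move=> k; rewrite size_map => Hk; rewrite (nth_map [::]) //.
have -> : k = Ordinal Hk by [].
rewrite nth_maskof /leafpred; apply/existsP/idP => [[j /andP [jI /eqP E]]|kI].
  have : j == Ordinal Hk.
    by rewrite -val_eqE /= -(nth_uniq [::] _ _ (uniq_leaveso t)) ?E.
  by move/eqP <-.
by exists (Ordinal Hk); rewrite kI eqxx.
Qed.

Lemma maskofC n (I : {set 'I_n}) : maskof (~: I) = map negb (maskof I).
Proof. by rewrite /maskof -map_comp; apply: eq_map => i /=; rewrite in_setC. Qed.

Lemma restro_leafpred (t : option tree) (I : {set 'I_(size (leaveso t))}) :
  restro (leafpred I) t = rmo (maskof I) t.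
Proof.
case: t I => [t|] I //=; rewrite restr_rm.
by have := leafpred_mask I => /= ->.
Qed.

Lemma shuffle_by_mask (T1 T2 T : mono X) I :
  @shuffle_by X T1 T2 T I =
  (Mred (maskof I) (val T) == T1) && (Mred (map negb (maskof I)) (val T) == T2).
Proof. by rewrite /shuffle_by !restro_leafpred maskofC. Qed.

Lemma card_maskof n (P : pred (seq bool)) :
  #|[set I : {set 'I_n} | P (maskof I)]| = count P (masks n).
Proof.
rewrite cardsE cardE /enum_mem size_filter -enumT -(count_map (@maskof n)).
apply/permP/uniq_perm; rewrite ?uniq_masks //.
  rewrite map_inj_uniq ?enum_uniq // => I J E; apply/setP => i.
  by rewrite -!nth_maskof E.
move=> b; rewrite mem_masks; apply/mapP/idP => [[I _ ->]|/eqP Hb].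
  by rewrite size_maskof.
exists [set i : 'I_n | nth false b i]; first by rewrite mem_enum.
apply: (@eq_from_nth _ false); first by rewrite size_maskof.
move=> k; rewrite Hb => Hk; have -> : k = Ordinal Hk by [].
by rewrite nth_maskof inE.
Qed.

Lemma D_cT (T1 T2 T : mono X) : D T T1 T2 = cT T1 T2 T.
Proof.
rewrite /cT; under eq_finset => I do rewrite shuffle_by_mask.
rewrite (card_maskof _ (fun b => (Mred b (val T) == T1) && (Mred (map negb b) (val T) == T2))).
by rewrite size_leavesO.
Qed.

End Restr.

Fixpoint expand (b b' : seq bool) : seq bool :=
  match b with
  | [::] => [::]
  | c :: b0 => if c then head false b' :: expand b0 (behead b') else false :: expand b0 b'
  end.

Lemma size_expand b b' : size (expand b b') = size b.
Proof. by elim: b b' => [|[] b IH] b' //=; rewrite IH. Qed.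

Lemma expand_cat b1 b2 b' :
  expand (b1 ++ b2) b' = expand b1 (take (count id b1) b') ++ expand b2 (drop (count id b1) b').
Proof.
elim: b1 b' => [|[] b1 IH] b' /=; rewrite ?take0 ?drop0 // ?IH //.
by case: b' => [|c b'] //=; rewrite IH.
Qed.

Lemma expand_nseq n b' : expand (nseq n false) b' = nseq n false.
Proof. by elim: n => //= n ->. Qed.

Lemma count0_nseq b : count id b = 0%N -> b = nseq (size b) false.
Proof. by elim: b => [|[] b IH] //= /IH {1}->. Qed.

Lemma mask3 n (F : seq bool -> seq bool -> seq bool -> nat) :
  \sum_(b <- masks n) \sum_(b' <- masks (count id b))
     F (expand b b') (expand b (map negb b')) (map negb b) =
  \sum_(b1 <- masks n) \sum_(b2 <- masks (count id (map negb b1)))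
     F b1 (expand (map negb b1) b2) (expand (map negb b1) (map negb b2)).
Proof.
elim: n F => [|n IH] F; first by rewrite /= !big_cons !big_nil.
have cnt_t b : count id (true :: b) = (count id b).+1 by [].
have cnt_f b : count id (false :: b) = count id b by [].
have ng c b : map negb (c :: b) = ~~ c :: map negb b by [].
rewrite masksS !big_cat !big_map.
under [X in X + _ = _]eq_bigr => b0 _ do rewrite cnt_t masksS big_cat !big_map.
under [X in _ = _ + X]eq_bigr => b0 _ do rewrite ng cnt_t masksS big_cat !big_map.
under [X in _ + X = _]eq_bigr => b0 _ do rewrite cnt_f.
under [X in _ = X + _]eq_bigr => b0 _ do rewrite ng cnt_f.
rewrite /= big_split /=.
rewrite (IH (fun A B C => F (true :: A) (false :: B) (false :: C))).
rewrite (IH (fun A B C => F (false :: A) (true :: B) (false :: C))).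
rewrite (IH (fun A B C => F (false :: A) (false :: B) (true :: C))).
by rewrite big_split /= addnA.
Qed.

Section Comp.
Variable X : countType.
Notation tree := (tree X).

Lemma take_nseq' (A : Type) i n (x : A) : take i (nseq n x) = nseq (minn i n) x.
Proof. by elim: n i => [|n IH] [|i] //=; rewrite ?minnSS IH. Qed.

Lemma rm_nseq k (t : tree) : rm (nseq k false) t = None.
Proof.
elim/tree_ind': t k => [x|ts IH] k; first by case: k.
rewrite rm_node; suff -> : pmap id (rml (@rm X) (nseq k false) ts) = [::] by [].
elim: ts k IH => [|u us IHus] k IH //=.
by rewrite take_nseq' IH ?mem_head //= drop_nseq IHus // => t Ht; apply: IH; rewrite inE Ht orbT.
Qed.

Lemma nl_rm b (t : tree) : size b = nl t -> nlo (rm b t) = count id b.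
Proof. by move=> Hb; rewrite /nlo labels_rm // size_mask // Hb. Qed.

Lemma rm_comp (t : tree) b b' : size b = nl t -> size b' = count id b ->
  rmo b' (rm b t) = rm (expand b b') t.
Proof.
elim/tree_ind': t b b' => [x|ts IH] b b'.
  by case: b => [|[] [|]] //= _; case: b' => [|[] [|]].
rewrite nl_node !rm_node => Hb Hb'.
have L : pmap id (rml (@rm X) b' (pmap id (rml (@rm X) b ts))) =
         pmap id (rml (@rm X) (expand b b') ts).
  elim: ts b b' Hb Hb' IH => [|u us IHus] b b' Hb Hb' IH //=.
  have IHr : (forall t, t \in us -> forall b b', size b = nl t -> size b' = count id b ->
      rmo b' (rm b t) = rm (expand b b') t) by move=> t Ht; apply: IH; rewrite inE Ht orbT.
  have Hu : (nl u <= size b)%N by rewrite Hb /= leq_addr.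
  move: Hb Hb'; rewrite -(cat_take_drop (nl u) b).
  move: (take (nl u) b) (drop (nl u) b) (size_takel Hu) => b1 b2 Hs1 Hb Hb'.
  have Hs2 : size b2 = sumn (map (@nl X) us).
    by move/eqP: Hb; rewrite size_cat Hs1 /= eqn_add2l => /eqP.
  rewrite count_cat in Hb'.
  rewrite take_size_cat // drop_size_cat // expand_cat take_size_cat ?size_expand //.
  rewrite drop_size_cat ?size_expand //.
  have Hs3 : size (drop (count id b1) b') = count id b2 by rewrite size_drop Hb' addKn.
  case E : (rm b1 u) => [s|] /=.
    have Hns : nl s = count id b1 by have := nl_rm Hs1; rewrite E.
    rewrite Hns.
    have Hs4 : size (take (count id b1) b') = count id b1 by rewrite size_takel // Hb' leq_addr.
    have := IH u (mem_head _ _) b1 (take (count id b1) b') Hs1 Hs4; rewrite E /= => ->.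
    by case: (rm (expand b1 _) u) => [s'|] /=; rewrite IHus.
  have H0 : count id b1 = 0%N by have := nl_rm Hs1; rewrite E.
  rewrite H0 drop0 (count0_nseq H0) expand_nseq rm_nseq /=.
  by apply: IHus; rewrite // Hb' H0.
case E : (pmap id (rml (@rm X) b ts)) L => [|s l] /= L.
  by rewrite -L.
by rewrite -L.
Qed.

Lemma rm_red (t : tree) b' : size b' = nl t -> redo (rm b' (red t)) = redo (rm b' t).
Proof.
elim/tree_ind': t b' => [x|ts IH] b' //.
have G : forall ts', (forall t, t \in ts' -> forall b', size b' = nl t ->
        redo (rm b' (red t)) = redo (rm b' t)) ->
    forall b', size b' = sumn (map (@nl X) ts') ->
    redo (rm b' (Node (map (@red X) ts'))) = redo (rm b' (Node ts')).
  move=> ts' IH' b'' Hb''; rewrite !rm_node !redo_nodeo; congr vee_raw.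
  elim: ts' b'' Hb'' IH' => [|u us IHus] b'' Hb'' IH' //=.
  have Hu : (nl u <= size b'')%N by rewrite Hb'' /= leq_addr.
  rewrite nl_red IH' ?mem_head ?size_takel //; congr cons; apply: IHus.
    by rewrite size_drop Hb'' /= addKn.
  by move=> t Ht; apply: IH'; rewrite inE Ht orbT.
rewrite nl_node red_node => Hb'.
case: ts IH Hb' => [|u [|v w]] IH Hb'; try by apply: G.
rewrite IH ?mem_head //; last by rewrite Hb' /= addn0.
rewrite rm_node /= take_oversize ?Hb' /= ?addn0 //.
by case: (rm b' u).
Qed.

Lemma nlo_redo (t : option tree) : nlo (redo t) = nlo t.
Proof. by case: t => [t|] //=; rewrite /nlo /= labels_red. Qed.

Lemma nlo_Mred b (x : option tree) : size b = nlo x -> nlo (val (Mred b x)) = count id b.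
Proof.
case: x => [t|] /= Hb; first by rewrite nlo_redo nl_rm.
by case: b Hb.
Qed.

Lemma Mred_comp (x : option tree) b b' : size b = nlo x -> size b' = count id b ->
  Mred b' (val (Mred b x)) = Mred (expand b b') x.
Proof.
move=> Hb Hb'; apply: val_inj => /=.
case: x Hb => [t|] Hb; last by case: b Hb Hb'.
rewrite /= -(rm_comp Hb Hb').
case E : (rm b t) => [y|] //=.
rewrite rm_red //; have := nl_rm Hb; rewrite E Hb' //.
Qed.

End Comp.

Lemma count_sum (T : Type) (P : pred T) s : count P s = \sum_(i <- s) P i.
Proof. by elim: s => [|y s IH]; rewrite ?big_nil ?big_cons //= IH. Qed.

Lemma sum_pick (T : eqType) (s : seq T) i (G : T -> nat) :
  uniq s -> i \in s -> \sum_(j <- s) (i == j) * G j = G i.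
Proof.
move=> Us Hi; rewrite (big_rem i) //= eqxx mul1n big1_seq ?addn0 // => j /andP [_ Hj].
move: Hj; rewrite mem_rem_uniq // inE => /andP [Hji _].
by rewrite eq_sym (negbTE Hji).
Qed.

Section Core.
Variable X : countType.

Definition Ssupp (m : mono X) := undup [seq Mred b (val m) | b <- masks (nlo (val m))].

Lemma D_sum (m u v : mono X) :
  D m u v = \sum_(b <- masks (nlo (val m))) (Mred b (val m) == u) * (Mred (map negb b) (val m) == v).
Proof. by rewrite /D count_sum; apply: eq_bigr => b _; rewrite mulnb. Qed.

Lemma sum_S (m : mono X) (G : mono X -> nat) (f : seq bool -> seq bool) (H : seq bool -> nat) :
  (forall b, b \in masks (nlo (val m)) -> f b \in masks (nlo (val m))) ->
  \sum_(u <- Ssupp m) G u * \sum_(b <- masks (nlo (val m))) (Mred (f b) (val m) == u) * H b =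
  \sum_(b <- masks (nlo (val m))) H b * G (Mred (f b) (val m)).
Proof.
move=> Hf; under eq_bigr => u _ do rewrite big_distrr /=.
rewrite exchange_big /=; apply: eq_big_seq => b Hb.
rewrite -(sum_pick (fun u => H b * G u) (undup_uniq _) (_ : Mred (f b) (val m) \in Ssupp m)).
  by apply: eq_bigr => u _; rewrite mulnC -mulnA.
by rewrite mem_undup; apply: map_f; apply: Hf.
Qed.

Lemma D_Mred (m : mono X) c s t : c \in masks (nlo (val m)) ->
  D (Mred c (val m)) s t =
  \sum_(b' <- masks (count id c))
     (Mred (expand c b') (val m) == s) * (Mred (expand c (map negb b')) (val m) == t).
Proof.
rewrite mem_masks => /eqP Hc; rewrite D_sum nlo_Mred //; apply: eq_big_seq => b'.
rewrite mem_masks => /eqP Hb'.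
by rewrite !Mred_comp // size_map.
Qed.

Lemma core (m s t v : mono X) :
  \sum_(u <- Ssupp m) D u s t * D m u v = \sum_(w <- Ssupp m) D m s w * D w t v.
Proof.
have Hneg b : b \in masks (nlo (val m)) -> map negb b \in masks (nlo (val m)) by rewrite !mem_masks size_map.
under eq_bigr => u _ do rewrite [D m u v]D_sum.
have E1 := @sum_S m (fun u => D u s t) (fun b => b) (fun b => Mred (map negb b) (val m) == v).
cbv beta in E1; rewrite E1 //.
under [in RHS]eq_bigr => w _ do rewrite mulnC [D m s w]D_sum.
under [in RHS]eq_bigr => w _ do under eq_bigr => b _ do rewrite mulnC.
have E2 := @sum_S m (fun w => D w t v) (map negb) (fun b => Mred b (val m) == s).
cbv beta in E2; rewrite E2 //.
transitivity (\sum_(b <- masks (nlo (val m))) \sum_(b' <- masks (count id b))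
  (fun A B C => (Mred A (val m) == s) * (Mred B (val m) == t) * (Mred C (val m) == v))
  (expand b b') (expand b (map negb b')) (map negb b)).
  apply: eq_big_seq => b Hb; rewrite D_Mred // big_distrr /=; apply: eq_bigr => b' _.
  by rewrite mulnC.
rewrite (mask3 (nlo (val m)) (fun A B C => (Mred A (val m) == s) * (Mred B (val m) == t) * (Mred C (val m) == v))); apply: eq_big_seq => b Hb; rewrite D_Mred ?Hneg // big_distrr /=.
by apply: eq_bigr => b' _; rewrite mulnA.
Qed.

End Core.

Section Assoc.
Variables (X : countType) (K : fieldType).
Local Open Scope ring_scope.

Lemma D0 (m u v : mono X) : u \notin Ssupp m -> D m u v = 0%N.
Proof.
move=> Hu; apply/eqP; rewrite -leqn0 leqNgt -has_count; apply/negP => /hasP [b Hb /andP [/eqP E _]].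
by move: Hu; rewrite mem_undup -E (map_f (fun b => Mred b (val m)) Hb).
Qed.

Lemma sum_coefS (f : vec X K) (s : seq (mono X)) (G : mono X -> K) :
  uniq s -> (forall u, u \notin s -> G u = 0) ->
  \sum_(p <- f) p.1 * G p.2 = \sum_(u <- s) coef f u * G u.
Proof.
move=> Us G0; rewrite /coef; under [in RHS]eq_bigr => u _ do rewrite big_mkcond mulr_suml.
rewrite exchange_big; apply: eq_bigr => p _ /=.
case Hin : (p.2 \in s).
  rewrite (big_rem p.2) //= eqxx big1_seq ?addr0 // => u /andP [_ Hu].
  move: Hu; rewrite mem_rem_uniq // inE => /andP [Hne _].
  by rewrite eq_sym (negbTE Hne) mul0r.
rewrite G0 ?Hin // mulr0 big1_seq // => u /andP [_ Hu].
case: eqP => [E|]; last by rewrite mul0r.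
by move: Hin; rewrite E Hu.
Qed.

Lemma assoc_coef sh : is_dual_of_delta sh -> forall (a b c : vec X K) m,
  coef (sh (sh a b) c) m = coef (sh a (sh b c)) m.
Proof.
move=> Hd a b c m; rewrite !coef_sh // /Bsum.
transitivity (\sum_(pa <- a) \sum_(pb <- b) \sum_(r <- c)
  pa.1 * pb.1 * r.1 * (\sum_(u <- Ssupp m) D u pa.2 pb.2 * D m u r.2)%:R).
  under eq_bigr => p _ do under eq_bigr => r _ do rewrite -mulrA.
  under eq_bigr => p _ do rewrite -mulr_sumr.
  rewrite (@sum_coefS (sh a b) (Ssupp m) (fun u => \sum_(r <- c) r.1 * (D m u r.2)%:R) (undup_uniq _)); last first.
    move=> u Hu; rewrite big1 // => r _; by rewrite D0 // mulr0.
  under eq_bigr => u _ do rewrite coef_sh // /Bsum mulr_suml.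
  under eq_bigr => u _ do under eq_bigr => pa _ do rewrite mulr_suml.
  under eq_bigr => u _ do under eq_bigr => pa _ do under eq_bigr => pb _ do rewrite mulr_sumr.
  rewrite exchange_big; apply: eq_bigr => pa _; rewrite exchange_big; apply: eq_bigr => pb _.
  rewrite exchange_big; apply: eq_bigr => r _; rewrite natr_sum mulr_sumr; apply: eq_bigr => u _.
  by rewrite natrM; ring.
under eq_bigr => pa _ do under eq_bigr => pb _ do under eq_bigr => r _ do rewrite core.
apply: eq_bigr => pa _.
under [in RHS]eq_bigr => r _ do rewrite -mulrA.
rewrite -mulr_sumr.
rewrite (@sum_coefS (sh b c) (Ssupp m) (fun w => (D m pa.2 w)%:R) (undup_uniq _)); last first.
  by move=> w Hw; rewrite D_sym D0.
under [in RHS]eq_bigr => w _ do rewrite coef_sh // /Bsum mulr_suml.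
under [in RHS]eq_bigr => w _ do under eq_bigr => pb _ do rewrite mulr_suml.
rewrite mulr_sumr.
under [in RHS]eq_bigr => w _ do rewrite mulr_sumr.
under [in RHS]eq_bigr => w _ do under eq_bigr => pb _ do rewrite mulr_sumr.
rewrite [in RHS]exchange_big; apply: eq_bigr => pb _.
rewrite [in RHS]exchange_big; apply: eq_bigr => r _.
rewrite natr_sum mulr_sumr; apply: eq_bigr => w _.
by rewrite natrM; ring.
Qed.
End Assoc.

Fixpoint lists (A : Type) (k : nat) (s : seq A) : seq (seq A) :=
  if k is k'.+1 then [::] :: [seq x :: l | x <- s, l <- lists k' s] else [:: [::]].

Lemma mem_lists (A : eqType) k (s : seq A) l :
  (l \in lists k s) = (size l <= k)%N && all (mem s) l.
Proof.
elim: k l => [|k IH] [|x l] //=; rewrite inE /=.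
apply/allpairsP/idP => [[[y l'] /= [Hy Hl [-> ->]]]|/andP [Hl /andP [Hx Ha]]].
  by rewrite /= ltnS Hy -IH Hl.
by exists (x, l); split=> //=; rewrite IH -ltnS Hl Ha.
Qed.

Lemma mem_mask_split (A : eqType) (x : A) s b : size b = size s -> x \in s ->
  (x \in mask b s) || (x \in mask (map negb b) s).
Proof.
elim: s b => [|y s IH] [|c b] //= [Hb]; rewrite inE => /orP [/eqP ->|Hx].
  by case: c; rewrite /= inE eqxx ?orbT.
by case: c; rewrite /= ?inE; have := IH b Hb Hx; case/orP => -> ; rewrite ?orbT.
Qed.

Section Ex.
Variable X : countType.
Notation tree := (tree X).

Fixpoint E (L : seq X) (k : nat) : seq tree :=
  if k is k'.+1 then map (@Leaf X) L ++ map (@Node X) (lists k' (E L k')) else [::].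

Lemma size_le_sumn (ts : seq tree) : all (fun t => 0 < nl t)%N ts -> (size ts <= sumn (map (@nl X) ts))%N.
Proof. by elim: ts => [|t ts IH] //= /andP [H1 /IH H2]; rewrite -add1n leq_add. Qed.

Lemma lt_sumn (ts : seq tree) t : all (fun t => 0 < nl t)%N ts -> (1 < size ts)%N -> t \in ts ->
  (nl t < sumn (map (@nl X) ts))%N.
Proof.
move=> Hp Hs Ht; rewrite sumnE big_map (big_rem t) //=.
rewrite -[X in (X < _)%N]addn0 ltn_add2l.
have : (0 < size (rem t ts))%N by rewrite size_rem // -ltnS prednK // (ltn_trans _ Hs).
case: (rem t ts) (fun u (Hu : u \in rem t ts) => allP Hp u (mem_rem Hu)) => [|u us] //= H _.
by rewrite big_cons (leq_trans (H u (mem_head _ _))) // leq_addr.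
Qed.

Lemma in_E (L : seq X) (t : tree) : reduced t -> all (mem L) (labels t) ->
  forall k, (nl t <= k)%N -> t \in E L k.+1.
Proof.
elim/tree_ind': t => [x|ts IH] /=.
  by move=> _; rewrite andbT => Hx k _; rewrite mem_cat map_f.
move=> /andP [Hs Hr] HL k Hk; rewrite mem_cat; apply/orP; right; apply: map_f.
have Hp : all (fun t => 0 < nl t)%N ts by apply/allP => t Ht; apply: nl_pos; apply: (allP Hr).
rewrite nl_node in Hk.
case: k Hk => [|k] Hk.
  by move: (leq_trans (size_le_sumn Hp) Hk); rewrite leqn0 size_eq0 => /eqP E0; rewrite E0 in Hs.
rewrite mem_lists (leq_trans (size_le_sumn Hp)) //=; apply/allP => t Ht.
apply: IH => //; first by apply: (allP Hr).
  apply/allP => x Hx; apply: (allP HL); apply/flattenP; exists (labels t) => //; exact: map_f.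
by rewrite -ltnS (leq_trans (lt_sumn Hp Hs Ht)).
Qed.

End Ex.

Section Ex2.
Variables (X : countType) (K : fieldType).
Local Open Scope ring_scope.

Lemma labels_Mred b (x : option (tree X)) : size b = nlo x ->
  labelso (val (Mred b x)) = mask b (labelso x).
Proof.
case: x => [t|] /= Hb; last by case: b Hb.
by rewrite -labels_rm //; case: (rm b t) => //= s; rewrite labels_red.
Qed.

Definition cand (u v : mono X) : seq (mono X) :=
  pmap insub (None :: map Some (E (labelso (val u) ++ labelso (val v)) (nlo (val u) + nlo (val v)).+1)).

Lemma D_cand (m u v : mono X) : (0 < D m u v)%N -> m \in cand u v.
Proof.
rewrite -has_count => /hasP [b]; rewrite mem_masks => /eqP Hb /andP [/eqP Hu /eqP Hv].
rewrite mem_pmap; have -> : Some m = insub (val m) by rewrite valK.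
apply: map_f; have Rm := valP m.
case Hm : (val m) Hb Hu Hv Rm => [t|] Hb Hu Hv Rm; last by rewrite mem_head.
rewrite inE; apply/orP; right; apply: map_f.
have Hbn : size (map negb b) = nlo (Some t) by rewrite size_map.
have Lu := labels_Mred Hb; have Lv := labels_Mred Hbn.
rewrite Hu in Lu; rewrite Hv in Lv.
apply: in_E => //.
  apply/allP => x Hx /=; rewrite mem_cat Lu Lv; exact: mem_mask_split.
rewrite /nlo Lu Lv !size_mask ?size_map // count_map.
by have := count_predC id b; rewrite Hb => ->.
Qed.
End Ex2.

Section Ex3.
Variables (X : countType) (K : fieldType).
Local Open Scope ring_scope.

Definition Cands (g1 g2 : vec X K) : seq (mono X) :=
  undup (flatten [seq cand p.2 q.2 | p <- g1, q <- g2]).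

Definition shc (g1 g2 : vec X K) : vec X K :=
  [seq (Bsum g1 g2 m, m) | m <- Cands g1 g2].

Lemma Bsum0 (g1 g2 : vec X K) m : m \notin Cands g1 g2 -> Bsum g1 g2 m = 0.
Proof.
move=> Hm; rewrite /Bsum big_seq big1 // => p Hp; rewrite big_seq big1 // => q Hq.
case: (posnP (D m p.2 q.2)) => [-> |H]; first by rewrite mulr0.
move: Hm; rewrite mem_undup; case/negP; apply/flattenP.
exists (cand p.2 q.2); last exact: D_cand.
exact: (allpairs_f (fun p q => cand p.2 q.2)).
Qed.

Lemma shc_dual : is_dual_of_delta shc.
Proof.
move=> g1 g2 h; rewrite form2_tens_delta /Defs.form /shc big_map.
under eq_bigr => j _ do rewrite big_mkcond /=.
rewrite exchange_big /=; apply: eq_bigr => q _.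
case Hin : (q.2 \in Cands g1 g2).
  rewrite (big_rem q.2) ?undup_uniq //= eqxx [q.1 * _]mulrC big1_seq ?addr0 // => u /andP [_ Hr].
  move: Hr; rewrite mem_rem_uniq ?undup_uniq // inE => /andP [Hu _].
  by rewrite (negbTE Hu).
rewrite Bsum0 ?Hin // mulr0 big1_seq // => u /andP [_ Hr].
case: eqP => // Hu; by move: Hin; rewrite -Hu Hr.
Qed.
End Ex3.

Local Open Scope ring_scope.

Theorem proposition4p6p1 (X : countType) (K : fieldType)
    (charK0 : [pchar K] =i pred0) :
  (exists sh : vec X K -> vec X K -> vec X K, is_dual_of_delta sh) /\
  (forall sh : vec X K -> vec X K -> vec X K, is_dual_of_delta sh ->
     (* bilinear *)
     (forall (k : K) (a b c : vec X K),
        coef (sh (vadd (vscale k a) b) c) =1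
        (fun m => k * coef (sh a c) m + coef (sh b c) m)) /\
     (forall (k : K) (a b c : vec X K),
        coef (sh a (vadd (vscale k b) c)) =1
        (fun m => k * coef (sh a b) m + coef (sh a c) m)) /\
     (* commutative *)
     (forall a b : vec X K, coef (sh a b) =1 coef (sh b a)) /\
     (* associative *)
     (forall a b c : vec X K,
        coef (sh (sh a b) c) =1 coef (sh a (sh b c))) /\
     (* unit *)
     coef (sh (vone X K) (vone X K)) =1 coef (vone X K) /\
     (* shuffle formula *)
     (forall T1 T2 : mono X,
        coef (sh (vmono K T1) (vmono K T2)) =1
        (fun T => if is_shuffle T1 T2 T then (cT T1 T2 T)%:R else 0)) /\
     (forall T1 T2 T : mono X, is_shuffle T1 T2 T -> (1 <= cT T1 T2 T)%N)).
Proof.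
split; first by exists (@shc X K); exact: shc_dual.
move=> sh Hd; split; [|split; [|split; [|split; [|split; [|split]]]]].
- by move=> k a b c m; rewrite !(coef_sh Hd) Bsum_addl.
- by move=> k a b c m; rewrite !(coef_sh Hd) Bsum_addr.
- by move=> a b m; rewrite !(coef_sh Hd) Bsum_comm.
- by move=> a b c m; apply: assoc_coef.
- move=> m; rewrite (coef_sh Hd) /vone Bsum_mono D_one /coef big_cons big_nil addr0 /=.
  by rewrite eq_sym; case: (mono1 X == m).
- move=> T1 T2 T; rewrite (coef_sh Hd) Bsum_mono D_cT; case: ifP => // Hn.
  have -> : cT T1 T2 T = 0%N; last by [].
  apply/eqP; rewrite cards_eq0; apply/eqP/setP => I; rewrite inE in_set0.
  apply/negP => H; move/negbT: Hn; rewrite /is_shuffle => /existsPn /(_ I); by rewrite H.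
- move=> T1 T2 T; rewrite /is_shuffle => /existsP [I HI]; rewrite /cT card_gt0; apply/set0Pn; exists I.
  by rewrite inE.
Qed.
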